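(* Let $I\subseteq\mathbb{R}_+$ be an open interval, let $p\in\mathbb{R}$ and $q<0$, and let $f:I\to\mathbb{R}_+$ be $(p,q)$-Jensen convex, i.e. \[ f\big(H_p(x,y)\big)\le H_q\big(f(x),f(y)\big)\qquad(x,y\in I). \] Then $f_{p,q}$ is convex on $I_p$, and consequently $f$ is continuous and moreover locally Lipschitz on $I$.
   Context: $\mathbb{R}_+=]0,\infty[$. For $p\in\mathbb{R}$ the power mean is $H_p(x,y)=\left(\frac{x^p+y^p}{2}\right)^{1/p}$ if $p\neq0$ and $H_0(x,y)=\sqrt{xy}$, for $x,y>0$. For $f:I\to\mathbb{R}_+$ and $(p,q)\in\mathbb{R}^2$, set $I_p=\{t^p\mid t\in I\}$ if $p\neq0$ and $I_p=\{\log t\mid t\in I\}$ if $p=0$, and define $f_{p,q}:I_p\to\mathbb{R}$ by $f_{p,q}(x)=\operatorname{sign}(q)\big(f(x^{1/p})\big)^q$ if $p\neq0,q\neq0$; $f_{p,q}(x)=\operatorname{sign}(q)\big(f(\exp x)\big)^q$ if $p=0,q\neq0$; $f_{p,q}(x)=\log f(x^{1/p})$ if $p\neq0,q=0$; $f_{p,q}(x)=\log f(\exp x)$ if $p=q=0$. *)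

(* Defs.v *)
From Stdlib Require Import Reals.
From Coquelicot Require Import Rbar.
Open Scope R_scope.

Definition H (p x y : R) : R :=
  if Req_EM_T p 0 then sqrt (x * y)
  else Rpower ((Rpower x p + Rpower y p) / 2) (1 / p).

Definition sgn (q : R) : R :=
  if Rlt_dec 0 q then 1 else if Rlt_dec q 0 then -1 else 0.

Definition is_open_interval (I : R -> Prop) : Prop :=
  exists a b : Rbar, Rbar_lt a b /\
    forall x, I x <-> (Rbar_lt a x /\ Rbar_lt x b).

Definition Ip (p : R) (I : R -> Prop) : R -> Prop :=
  fun u => exists t, I t /\ u = (if Req_EM_T p 0 then ln t else Rpower t p).

Definition fpq (p q : R) (f : R -> R) (x : R) : R :=
  let y := if Req_EM_T p 0 then exp x else Rpower x (1 / p) in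
  if Req_EM_T q 0 then ln (f y) else sgn q * Rpower (f y) q.

Definition convex_on (D : R -> Prop) (g : R -> R) : Prop :=
  forall u v t, D u -> D v -> 0 <= t <= 1 ->
    g (t * u + (1 - t) * v) <= t * g u + (1 - t) * g v.

Definition locally_lipschitz_on (I : R -> Prop) (f : R -> R) : Prop :=
  forall x, I x -> exists delta L, 0 < delta /\
    forall u v, I u -> I v -> Rabs (u - x) < delta -> Rabs (v - x) < delta ->
      Rabs (f u - f v) <= L * Rabs (u - v).

(* Main.v *)
Require Import Defs.
From Stdlib Require Import Reals Lra Lia ZArith.
From Coquelicot Require Import Rbar.
Open Scope R_scope.
Lemma exp_le' a b : a <= b -> exp a <= exp b.
Proof. intros [h|h]; [left; apply exp_increasing; auto| subst; lra]. Qed.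

Lemma ln_le' a b : 0 < a -> a <= b -> ln a <= ln b.
Proof. intros ha [h|h]; [left; apply ln_increasing; auto| subst; lra]. Qed.

Definition phi (p x : R) := if Req_EM_T p 0 then ln x else Rpower x p.
Definition psi (p u : R) := if Req_EM_T p 0 then exp u else Rpower u (1/p).

Lemma Rpower_pos x e : 0 < Rpower x e.
Proof. unfold Rpower; apply exp_pos. Qed.

Lemma psi_pos p u : 0 < psi p u.
Proof. unfold psi; destruct Req_EM_T; [apply exp_pos|apply Rpower_pos]. Qed.

Lemma psi_phi p x : 0 < x -> psi p (phi p x) = x.
Proof.
  intros hx; unfold psi, phi; destruct Req_EM_T. apply exp_ln; auto.
  rewrite Rpower_mult. replace (p * (1/p)) with 1 by (field; auto). apply Rpower_1; auto.
Qed.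

Lemma phi_psi p u : (p = 0 \/ 0 < u) -> phi p (psi p u) = u.
Proof.
  intros hu; unfold psi, phi; destruct Req_EM_T. apply ln_exp.
  destruct hu as [hu|hu]; [contradiction|].
  rewrite Rpower_mult. replace (1/p * p) with 1 by (field; auto). apply Rpower_1; auto.
Qed.

Lemma phi_P p x : 0 < x -> p = 0 \/ 0 < phi p x.
Proof. intros; unfold phi; destruct Req_EM_T; auto. right; apply Rpower_pos. Qed.

Lemma pow_mono_or c :
  (forall a b, 0 < a -> 0 < b -> a <= b -> Rpower a c <= Rpower b c) \/
  (forall a b, 0 < a -> 0 < b -> a <= b -> Rpower b c <= Rpower a c).
Proof.
  destruct (Rle_dec 0 c).
  - left; intros a b ha hb hab. unfold Rpower; apply exp_le'. pose proof (ln_le' a b ha hab); nra.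
  - right; intros a b ha hb hab. unfold Rpower; apply exp_le'. pose proof (ln_le' a b ha hab); nra.
Qed.

Lemma psi_mono p :
  (forall a b, (p = 0 \/ 0 < a) -> (p = 0 \/ 0 < b) -> a <= b -> psi p a <= psi p b) \/
  (forall a b, (p = 0 \/ 0 < a) -> (p = 0 \/ 0 < b) -> a <= b -> psi p b <= psi p a).
Proof.
  unfold psi; destruct Req_EM_T. left; intros; apply exp_le'; auto.
  destruct (pow_mono_or (1/p)) as [h|h]; [left|right]; intros a b [ha|ha] [hb|hb] hab;
    try contradiction; apply h; auto.
Qed.

Lemma phi_smono p :
  (forall x y, 0 < x -> x < y -> phi p x < phi p y) \/
  (forall x y, 0 < x -> x < y -> phi p y < phi p x).
Proof.
  unfold phi; destruct Req_EM_T. left; intros; apply ln_increasing; auto.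
  destruct (Rlt_dec 0 p).
  - left; intros x y hx hxy. unfold Rpower; apply exp_increasing.
    pose proof (ln_increasing x y hx hxy); nra.
  - right; intros x y hx hxy. unfold Rpower; apply exp_increasing.
    pose proof (ln_increasing x y hx hxy). assert (p < 0) by lra. nra.
Qed.

Definition btw (u v z : R) := Rmin u v <= z <= Rmax u v.

Lemma btw_map (h : R -> R) (P : R -> Prop) :
  (forall a b, P a -> P b -> a <= b -> h a <= h b) \/ (forall a b, P a -> P b -> a <= b -> h b <= h a) ->
  forall u v z, P u -> P v -> P z -> btw u v z -> btw (h u) (h v) (h z).
Proof.
  intros hm u v z hu hv hz. unfold btw.
  pose proof (Rmin_l (h u) (h v)). pose proof (Rmin_r (h u) (h v)).
  pose proof (Rmax_l (h u) (h v)). pose proof (Rmax_r (h u) (h v)).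
  destruct (Rle_dec u v).
  - rewrite Rmin_left, Rmax_right by auto. intros hb.
    destruct hm as [hm|hm].
    + pose proof (hm u z hu hz ltac:(lra)). pose proof (hm z v hz hv ltac:(lra)). lra.
    + pose proof (hm u z hu hz ltac:(lra)). pose proof (hm z v hz hv ltac:(lra)). lra.
  - rewrite Rmin_right, Rmax_left by lra. intros hb.
    destruct hm as [hm|hm].
    + pose proof (hm v z hv hz ltac:(lra)). pose proof (hm z u hz hu ltac:(lra)). lra.
    + pose proof (hm v z hv hz ltac:(lra)). pose proof (hm z u hz hu ltac:(lra)). lra.
Qed.

Lemma btw_comb u v t : 0 <= t <= 1 -> btw u v (t*u + (1-t)*v).
Proof.
  intros ht. unfold btw. destruct (Rle_dec u v).
  - rewrite Rmin_left, Rmax_right by auto. nra.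
  - rewrite Rmin_right, Rmax_left by lra. nra.
Qed.

Lemma I_conv I : is_open_interval I -> forall x y z, I x -> I y -> btw x y z -> I z.
Proof.
  intros [a [b [hab hI]]] x y z hx hy hz. apply hI in hx. apply hI in hy. apply hI.
  unfold btw in hz.
  pose proof (Rmin_l x y). pose proof (Rmin_r x y). pose proof (Rmax_l x y). pose proof (Rmax_r x y).
  assert (Rmin x y = x \/ Rmin x y = y) by (unfold Rmin; destruct Rle_dec; auto).
  assert (Rmax x y = x \/ Rmax x y = y) by (unfold Rmax; destruct Rle_dec; auto).
  destruct a, b; simpl in *; intuition lra.
Qed.

Lemma I_open I : is_open_interval I -> forall x, I x -> exists a b, I a /\ I b /\ a < x < b.
Proof.
  intros [a [b [hab hI]]] x hx. pose proof hx as hx'. apply hI in hx.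
  assert (ea : exists a', I a' /\ a' < x).
  { destruct a as [a| |]; simpl in hx; try tauto.
    - exists ((a+x)/2). split; [|lra]. apply hI. destruct b; simpl in *; intuition lra.
    - exists (x-1). split; [|lra]. apply hI. destruct b; simpl in *; intuition lra. }
  assert (eb : exists b', I b' /\ x < b').
  { destruct b as [b| |]; simpl in hx; try tauto.
    - exists ((b+x)/2). split; [|lra]. apply hI. destruct a; simpl in *; intuition lra.
    - exists (x+1). split; [|lra]. apply hI. destruct a; simpl in *; intuition lra. }
  destruct ea as [a' [? ?]]; destruct eb as [b' [? ?]]. exists a', b'; auto.
Qed.

Lemma H_eq p x y : 0 < x -> 0 < y -> H p x y = psi p ((phi p x + phi p y)/2).
Proof.
  intros hx hy. unfold H, psi, phi. destruct Req_EM_T; auto.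
  set (ee := exp ((ln x + ln y)/2)).
  assert (x*y = ee*ee).
  { unfold ee. rewrite <- exp_plus. replace ((ln x + ln y)/2 + (ln x + ln y)/2) with (ln x + ln y) by field.
    rewrite exp_plus, !exp_ln; auto. }
  rewrite H. apply sqrt_square. left; apply exp_pos.
Qed.

Lemma fpq_eq p q f u : q < 0 -> fpq p q f u = - Rpower (f (psi p u)) q.
Proof.
  intros hq. unfold fpq, psi, sgn. destruct (Req_EM_T q 0); [lra|].
  destruct (Rlt_dec 0 q); [lra|]. destruct (Rlt_dec q 0); [|lra].
  destruct (Req_EM_T p 0); ring.
Qed.
Lemma Rpower_base_le_neg a b c : c <= 0 -> 0 < a <= b -> Rpower b c <= Rpower a c.
Proof.
  intros hc [ha hab]. unfold Rpower. apply exp_le'.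
  pose proof (ln_le' a b ha hab). nra.
Qed.

Lemma Rpower_bound a b x e : 0 < a -> a <= x <= b -> Rpower x e <= Rpower a e + Rpower b e.
Proof.
  intros ha hx. assert (Rpower a e > 0) by (unfold Rpower; apply exp_pos).
  assert (Rpower b e > 0) by (unfold Rpower; apply exp_pos).
  destruct (Rle_dec 0 e).
  - pose proof (Rle_Rpower_l x b e r ltac:(lra)). lra.
  - pose proof (Rpower_base_le_neg a x e ltac:(lra) ltac:(lra)). lra.
Qed.

Lemma pow2_ge n : INR n <= 2 ^ n.
Proof.
  induction n. simpl; lra. rewrite S_INR. simpl.
  assert (1 <= 2 ^ n) by (clear IHn; induction n; simpl; lra). lra.
Qed.

Lemma mid_to_conv (D : R -> Prop) (g : R -> R) :
  (forall u v t, D u -> D v -> 0 <= t <= 1 -> D (t*u + (1-t)*v)) ->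
  (forall u v, D u -> D v -> g ((u+v)/2) <= (g u + g v)/2) ->
  (forall u, D u -> g u <= 0) ->
  convex_on D g.
Proof.
  intros hD hmid hneg u v t hu hv ht.
  set (phi := fun s => g (s*u + (1-s)*v) - (s * g u + (1-s) * g v)).
  assert (hP : forall s, 0 <= s <= 1 -> D (s*u + (1-s)*v)) by (intros; apply hD; auto).
  assert (h0 : phi 0 = 0).
  { unfold phi. replace (0*u+(1-0)*v) with v by ring. ring. }
  assert (h1 : phi 1 = 0).
  { unfold phi. replace (1*u+(1-1)*v) with u by ring. ring. }
  assert (hmidphi : forall a b, 0 <= a <= 1 -> 0 <= b <= 1 -> phi ((a+b)/2) <= (phi a + phi b)/2).
  { intros a b ha hb. unfold phi.
    replace ((a+b)/2*u + (1-(a+b)/2)*v) with (((a*u+(1-a)*v) + (b*u+(1-b)*v))/2) by field.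
    pose proof (hmid _ _ (hP a ha) (hP b hb)). lra. }
  assert (hdbl : forall s, 0 <= s <= 1 -> exists s', 0 <= s' <= 1 /\ 2 * phi s <= phi s').
  { intros s hs. destruct (Rle_dec s (1/2)).
    - exists (2*s). split. lra.
      pose proof (hmidphi 0 (2*s) ltac:(lra) ltac:(lra)) as hh.
      replace ((0 + 2*s)/2) with s in hh by field. lra.
    - exists (2*s-1). split. lra.
      pose proof (hmidphi 1 (2*s-1) ltac:(lra) ltac:(lra)) as hh.
      replace ((1 + (2*s-1))/2) with s in hh by field. lra. }
  assert (hit : forall n, exists s', 0 <= s' <= 1 /\ 2^n * phi t <= phi s').
  { induction n. exists t. simpl. split; lra.
    destruct IHn as [s' [hs' hs'']]. destruct (hdbl s' hs') as [s'' [h1' h2']].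
    exists s''. split; auto. simpl. lra. }
  assert (hbnd : forall s, 0 <= s <= 1 -> phi s <= Rabs (g u) + Rabs (g v)).
  { intros s hs. unfold phi. pose proof (hneg _ (hP s hs)).
    pose proof (Rabs_pos (g u)). pose proof (Rabs_pos (g v)).
    pose proof (Rle_abs (- g u)). pose proof (Rle_abs (- g v)).
    rewrite Rabs_Ropp in *. nra. }
  destruct (Rle_dec (phi t) 0) as [hle|hgt].
  - unfold phi in hle. lra.
  - exfalso. apply Rnot_le_lt in hgt.
    destruct (archimed ((Rabs (g u) + Rabs (g v)) / phi t)) as [ha _].
    set (m := up _) in ha.
    assert (0 <= IZR m).
    { apply Rle_trans with ((Rabs (g u) + Rabs (g v)) / phi t); [|lra].
      unfold Rdiv; apply Rmult_le_pos; [pose proof (Rabs_pos (g u)); pose proof (Rabs_pos (g v)); lra | left; apply Rinv_0_lt_compat; lra]. }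
    assert (hm : (0 <= m)%Z) by (apply le_IZR; auto).
    destruct (hit (Z.to_nat m)) as [s [hs hs2]].
    pose proof (pow2_ge (Z.to_nat m)) as hp2. rewrite INR_IZR_INZ, Z2Nat.id in hp2 by auto.
    pose proof (hbnd s hs) as hb.
    assert ((Rabs (g u) + Rabs (g v)) < IZR m * phi t).
    { apply (Rmult_lt_compat_r (phi t)) in ha; auto. unfold Rdiv in ha.
      rewrite Rmult_assoc, Rinv_l in ha; lra. }
    nra.
Qed.
Section Conv.
Variables (D : R -> Prop) (g : R -> R).
Hypothesis hD : forall u v t, D u -> D v -> 0 <= t <= 1 -> D (t*u + (1-t)*v).
Hypothesis hc : convex_on D g.

Lemma chord x y z : D x -> D z -> x < y < z ->
  (g y - g x)/(y-x) <= (g z - g x)/(z-x) /\ (g z - g x)/(z-x) <= (g z - g y)/(z-y).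
Proof.
  intros hx hz hy.
  pose proof (hc x z ((z-y)/(z-x)) hx hz) as G.
  replace ((z - y) / (z - x) * x + (1 - (z - y) / (z - x)) * z) with y in G by (field; lra).
  assert (h01 : 0 <= (z-y)/(z-x) <= 1).
  { split. apply Rmult_le_pos; [lra| left; apply Rinv_0_lt_compat; lra].
    apply (Rmult_le_reg_r (z-x)); [lra|]. unfold Rdiv. rewrite Rmult_assoc, Rinv_l; lra. }
  specialize (G h01).
  set (s1 := (g y - g x)/(y-x)). set (s2 := (g z - g x)/(z-x)). set (s3 := (g z - g y)/(z-y)).
  assert (e1 : g y = g x + s1*(y-x)) by (unfold s1; field; lra).
  assert (e2 : g z = g x + s2*(z-x)) by (unfold s2; field; lra).
  assert (e3 : g z = g y + s3*(z-y)) by (unfold s3; field; lra).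
  assert (e4 : (z-y)/(z-x) = (z-y) * / (z-x)) by reflexivity.
  set (t := (z-y)/(z-x)) in *.
  assert (et : t * (z-x) = z-y) by (unfold t; field; lra).
  assert (G' : g y * (z-x) <= t*(z-x) * g x + (1 - t)*(z-x) * g z).
  { pose proof (Rmult_le_compat_r (z-x) _ _ ltac:(lra) G). nra. }
  rewrite et in G'. replace ((1-t)*(z-x)) with (y-x) in G' by nra.
  split.
  - rewrite e1, e2 in G'. nra.
  - assert (e5: g y = g z - s3*(z-y)) by lra. rewrite e5 in G'. rewrite e2 in G'. nra.
Qed.

Lemma in_seg A B x : D A -> D B -> A <= x <= B -> D x.
Proof.
  intros hA hB hx. destruct (Req_dec A B).
  - subst. replace x with B by lra. auto.
  - replace x with ((B-x)/(B-A)*A + (1-(B-x)/(B-A))*B) by (field; lra).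
    apply hD; auto. split.
    apply Rmult_le_pos; [lra| left; apply Rinv_0_lt_compat; lra].
    apply (Rmult_le_reg_r (B-A)); [lra|]. unfold Rdiv. rewrite Rmult_assoc, Rinv_l; lra.
Qed.

Lemma conv_lip A A' B' B : D A -> D B -> A < A' -> A' <= B' -> B' < B ->
  forall u v, A' <= u <= B' -> A' <= v <= B' ->
  Rabs (g u - g v) <= (Rabs ((g A' - g A)/(A'-A)) + Rabs ((g B - g B')/(B-B'))) * Rabs (u - v).
Proof.
  intros hA hB h1 h2 h3.
  set (L := Rabs ((g A' - g A)/(A'-A)) + Rabs ((g B - g B')/(B-B'))).
  assert (key : forall u v, A' <= u <= B' -> A' <= v <= B' -> u < v ->
     Rabs (g u - g v) <= L * Rabs (u - v)).
  { intros u v hu hv huv.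
    assert (Du : D u) by (apply (in_seg A B); auto; lra).
    assert (Dv : D v) by (apply (in_seg A B); auto; lra).
    assert (DA' : D A') by (apply (in_seg A B); auto; lra).
    assert (DB' : D B') by (apply (in_seg A B); auto; lra).
    set (s := (g v - g u)/(v-u)).
    assert (lo : (g A' - g A)/(A'-A) <= s).
    { assert (l1 : (g A' - g A)/(A'-A) <= (g u - g A)/(u-A)).
      { destruct (Req_dec A' u). subst; lra. apply (chord A A' u); auto; lra. }
      pose proof (chord A u v hA Dv ltac:(lra)). unfold s; lra. }
    assert (hi : s <= (g B - g B')/(B-B')).
    { assert (l1 : (g B - g v)/(B-v) <= (g B - g B')/(B-B')).
      { destruct (Req_dec v B'). subst; lra. apply (chord v B' B); auto; lra. }
      pose proof (chord u v B Du hB ltac:(lra)). unfold s; lra. }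
    assert (es : g u - g v = - s * (v - u)) by (unfold s; field; lra).
    rewrite es, Rabs_mult, Rabs_Ropp. rewrite (Rabs_minus_sym u v).
    apply Rmult_le_compat_r. apply Rabs_pos.
    unfold L. apply Rabs_le. pose proof (Rabs_pos ((g A' - g A)/(A'-A))).
    pose proof (Rabs_pos ((g B - g B')/(B-B'))).
    pose proof (Rle_abs ((g B - g B')/(B-B'))).
    pose proof (Rle_abs (- ((g A' - g A)/(A'-A)))). rewrite Rabs_Ropp in *. lra. }
  intros u v hu hv. destruct (Rtotal_order u v) as [h|[h|h]].
  - apply key; auto.
  - subst. rewrite !Rminus_diag, Rabs_R0. lra.
  - rewrite Rabs_minus_sym, (Rabs_minus_sym u v). apply key; auto.
Qed.
End Conv.

Lemma deriv_lip (h h' : R -> R) a b K :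
  (forall x, a <= x <= b -> derivable_pt_lim h x (h' x)) ->
  (forall x, a <= x <= b -> Rabs (h' x) <= K) ->
  forall u v, a <= u <= b -> a <= v <= b -> Rabs (h u - h v) <= K * Rabs (u - v).
Proof.
  intros hd hK u v hu hv.
  destruct (MVT_abs h h' v u) as [c [e hc]].
  { intros c hc. apply hd. split.
    apply Rle_trans with (Rmin v u); try lra. apply Rmin_glb; lra.
    apply Rle_trans with (Rmax v u); try lra. apply Rmax_lub; lra. }
  rewrite e. apply Rmult_le_compat_r. apply Rabs_pos. apply hK. split.
  apply Rle_trans with (Rmin v u); try lra. apply Rmin_glb; lra.
  apply Rle_trans with (Rmax v u); try lra. apply Rmax_lub; lra.
Qed.

Lemma conv_upper (D : R -> Prop) (g : R -> R) :
  convex_on D g -> forall A B x, D A -> D B -> A <= x <= B -> g x <= Rmax (g A) (g B).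
Proof.
  intros hc A B x hA hB hx. destruct (Req_dec A B).
  - subst. replace x with B by lra. apply Rmax_l.
  - set (t := (B-x)/(B-A)).
    assert (ht : 0 <= t <= 1).
    { unfold t; split. apply Rmult_le_pos; [lra| left; apply Rinv_0_lt_compat; lra].
      apply (Rmult_le_reg_r (B-A)); [lra|]. unfold Rdiv. rewrite Rmult_assoc, Rinv_l; lra. }
    pose proof (hc A B t hA hB ht) as G.
    replace (t*A + (1-t)*B) with x in G by (unfold t; field; lra).
    pose proof (Rmax_l (g A) (g B)). pose proof (Rmax_r (g A) (g B)). nra.
Qed.
Lemma F_der y e : y < 0 -> derivable_pt_lim (fun y => Rpower (-y) e) y ((e * Rpower (-y) (e-1)) * (-1)).
Proof.
intros hy.
pose proof (derivable_pt_lim_comp (opp_fct id) (fun x => Rpower x e) y (-1) (e * Rpower (-y) (e-1))) as h.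
apply h. apply derivable_pt_lim_opp. apply derivable_pt_lim_id.
apply derivable_pt_lim_power. unfold opp_fct, id. lra.
Qed.

Lemma F_lip e c d : c <= d -> d < 0 -> exists K, 0 <= K /\
  forall u v, c <= u <= d -> c <= v <= d -> Rabs (Rpower (-u) e - Rpower (-v) e) <= K * Rabs (u - v).
Proof.
  intros hcd hd. exists (Rabs e * (Rpower (-d) (e-1) + Rpower (-c) (e-1))). split.
  { apply Rmult_le_pos. apply Rabs_pos. pose proof (Rpower_pos (-d) (e-1)). pose proof (Rpower_pos (-c) (e-1)). lra. }
  apply (deriv_lip (fun y => Rpower (-y) e) (fun y => (e * Rpower (-y) (e-1)) * (-1))).
  - intros x hx. apply F_der. lra.
  - intros x hx. rewrite Rabs_mult, Rabs_mult. rewrite (Rabs_pos_eq (Rpower _ _)) by (left; apply Rpower_pos).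
    replace (Rabs (-1)) with 1 by (rewrite Rabs_left; lra). rewrite Rmult_1_r. apply Rmult_le_compat_l. apply Rabs_pos.
    apply Rpower_bound; lra.
Qed.

Lemma phi_lip p a b : 0 < a -> exists K, 0 <= K /\
  forall u v, a <= u <= b -> a <= v <= b -> Rabs (phi p u - phi p v) <= K * Rabs (u - v).
Proof.
  intros ha. unfold phi. destruct (Req_EM_T p 0).
  - exists (/ a). split. left; apply Rinv_0_lt_compat; auto.
    apply (deriv_lip ln Rinv).
    + intros x hx. apply derivable_pt_lim_ln. lra.
    + intros x hx. rewrite Rabs_pos_eq by (left; apply Rinv_0_lt_compat; lra).
      apply Rinv_le_contravar; lra.
  - exists (Rabs p * (Rpower a (p-1) + Rpower b (p-1))). split.
    { apply Rmult_le_pos. apply Rabs_pos. pose proof (Rpower_pos a (p-1)). pose proof (Rpower_pos b (p-1)). lra. }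
    apply (deriv_lip (fun x => Rpower x p) (fun x => p * Rpower x (p-1))).
    + intros x hx. apply derivable_pt_lim_power. lra.
    + intros x hx. rewrite Rabs_mult. rewrite (Rabs_pos_eq (Rpower _ _)) by (left; apply Rpower_pos).
      apply Rmult_le_compat_l. apply Rabs_pos. apply Rpower_bound; lra.
Qed.

Section Main.
Variables (I : R -> Prop) (p q : R) (f : R -> R).
Hypotheses (hI : is_open_interval I) (hIpos : forall x, I x -> 0 < x)
  (hq : q < 0) (hfpos : forall x, I x -> 0 < f x)
  (hconv : forall x y, I x -> I y -> f (H p x y) <= H q (f x) (f y)).

Lemma D_char u : Ip p I u -> (p = 0 \/ 0 < u) /\ I (psi p u) /\ phi p (psi p u) = u.
Proof.
  intros [t [ht e]]. change (u = phi p t) in e. subst u.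
  rewrite psi_phi by auto. split; auto. apply phi_P; auto.
Qed.

Lemma D_intro x : I x -> Ip p I (phi p x).
Proof. intros hx; exists x; split; auto. Qed.

Lemma D_conv u v t : Ip p I u -> Ip p I v -> 0 <= t <= 1 -> Ip p I (t*u + (1-t)*v).
Proof.
  intros hu hv ht. destruct (D_char u hu) as [Pu [Iu eu]]. destruct (D_char v hv) as [Pv [Iv ev]].
  set (w := t*u + (1-t)*v).
  assert (Pw : p = 0 \/ 0 < w).
  { destruct Pu as [|Pu]; auto. destruct Pv as [|Pv]; auto. right. unfold w. nra. }
  assert (hb : btw (psi p u) (psi p v) (psi p w)).
  { apply (btw_map (psi p) (fun z => p = 0 \/ 0 < z)); auto. apply psi_mono. apply btw_comb; auto. }
  assert (Iw : I (psi p w)) by (apply (I_conv I hI (psi p u) (psi p v)); auto).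
  rewrite <- (phi_psi p w Pw). apply D_intro; auto.
Qed.

Lemma g_neg u : Ip p I u -> fpq p q f u < 0.
Proof.
  intros hu. rewrite fpq_eq by auto. pose proof (Rpower_pos (f (psi p u)) q). lra.
Qed.

Lemma g_mid u v : Ip p I u -> Ip p I v -> fpq p q f ((u+v)/2) <= (fpq p q f u + fpq p q f v)/2.
Proof.
  intros hu hv. destruct (D_char u hu) as [Pu [Iu eu]]. destruct (D_char v hv) as [Pv [Iv ev]].
  assert (hm : Ip p I ((u+v)/2)).
  { replace ((u+v)/2) with (1/2*u + (1-1/2)*v) by field. apply D_conv; auto; lra. }
  destruct (D_char _ hm) as [_ [Im _]].
  pose proof (hconv _ _ Iu Iv) as hc.
  rewrite H_eq in hc by auto. rewrite eu, ev in hc.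
  rewrite !fpq_eq by auto.
  unfold H in hc. destruct (Req_EM_T q 0); [lra|].
  set (S := (Rpower (f (psi p u)) q + Rpower (f (psi p v)) q) / 2) in *.
  assert (hS : 0 < S) by (unfold S; pose proof (Rpower_pos (f (psi p u)) q); pose proof (Rpower_pos (f (psi p v)) q); lra).
  pose proof (Rpower_base_le_neg (f (psi p ((u+v)/2))) (Rpower S (1/q)) q ltac:(lra)
    (conj (hfpos _ Im) hc)) as h2.
  rewrite Rpower_mult in h2. replace (1/q*q) with 1 in h2 by (field; lra).
  rewrite Rpower_1 in h2 by auto. unfold S in h2. lra.
Qed.

Lemma g_convex : convex_on (Ip p I) (fpq p q f).
Proof.
  apply mid_to_conv. apply D_conv. apply g_mid. intros u hu; left; apply g_neg; auto.
Qed.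

Lemma f_eq u : I u -> f u = Rpower (- fpq p q f (phi p u)) (1/q).
Proof.
  intros hu. rewrite fpq_eq, psi_phi by auto. rewrite Ropp_involutive, Rpower_mult.
  replace (q * (1/q)) with 1 by (field; lra). rewrite Rpower_1; auto.
Qed.

Lemma f_loc x0 : I x0 -> exists delta L, 0 < delta /\ 0 <= L /\
  forall u v, Rabs (u - x0) < delta -> Rabs (v - x0) < delta ->
   I u /\ I v /\ Rabs (f u - f v) <= L * Rabs (u - v).
Proof.
  intros hx0. destruct (I_open I hI x0 hx0) as [a [b [Ia [Ib hab]]]].
  pose proof (hIpos a Ia) as ha0.
  set (a1 := (a+x0)/2). set (b1 := (x0+b)/2).
  assert (himg : exists A A' B' B, Ip p I A /\ Ip p I B /\ A < A' /\ A' <= B' /\ B' < B /\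
     forall u, a1 <= u <= b1 -> A' <= phi p u <= B').
  { assert (0 < a1) by (unfold a1; lra).
    assert (a < a1 < b1 /\ b1 < b) by (unfold a1, b1; lra).
    destruct (phi_smono p) as [hm|hm].
    - exists (phi p a), (phi p a1), (phi p b1), (phi p b).
      split; [apply D_intro; auto|]. split; [apply D_intro; auto|].
      split; [apply hm; lra|]. split; [left; apply hm; lra|]. split; [apply hm; lra|].
      intros u [hu1 hu2]. split.
      + destruct (Rle_lt_or_eq_dec _ _ hu1) as [h|h]; [left; apply hm; lra| rewrite h; lra].
      + destruct (Rle_lt_or_eq_dec _ _ hu2) as [h|h]; [left; apply hm; lra| rewrite h; lra].
    - exists (phi p b), (phi p b1), (phi p a1), (phi p a).
      split; [apply D_intro; auto|]. split; [apply D_intro; auto|].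
      split; [apply hm; lra|]. split; [left; apply hm; lra|]. split; [apply hm; lra|].
      intros u [hu1 hu2]. split.
      + destruct (Rle_lt_or_eq_dec _ _ hu2) as [h|h]; [left; apply hm; lra| rewrite h; lra].
      + destruct (Rle_lt_or_eq_dec _ _ hu1) as [h|h]; [left; apply hm; lra| rewrite h; lra]. }
  destruct himg as [A [A' [B' [B [DA [DB [h1 [h2 [h3 himg]]]]]]]]].
  set (g := fpq p q f).
  pose proof (conv_lip (Ip p I) g D_conv g_convex A A' B' B DA DB h1 h2 h3) as glip.
  set (Lg := Rabs ((g A' - g A)/(A'-A)) + Rabs ((g B - g B')/(B-B'))) in glip.
  assert (hLg : 0 <= Lg) by (unfold Lg; pose proof (Rabs_pos ((g A' - g A)/(A'-A))); pose proof (Rabs_pos ((g B - g B')/(B-B'))); lra).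
  assert (DA' : Ip p I A') by (apply (in_seg _ D_conv A B); auto; lra).
  assert (DB' : Ip p I B') by (apply (in_seg _ D_conv A B); auto; lra).
  set (c := g A' - Lg * (B' - A')). set (d := Rmax (g A') (g B')).
  assert (hd : d < 0) by (unfold d; apply Rmax_lub_lt; apply g_neg; auto).
  assert (hrange : forall w, A' <= w <= B' -> c <= g w <= d).
  { intros w hw. split.
    - pose proof (glip w A' hw ltac:(lra)) as k1. rewrite Rabs_pos_eq with (x := w - A') in k1 by lra.
      pose proof (Rle_abs (g A' - g w)) as k2. rewrite Rabs_minus_sym in k2. unfold c. nra.
    - apply (conv_upper _ _ g_convex); auto. }
  assert (hcd : c <= d) by (pose proof (hrange A' ltac:(lra)); lra).
  destruct (F_lip (1/q) c d hcd hd) as [KF [hKF Flip]].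
  destruct (phi_lip p a1 b1 ltac:(unfold a1; lra)) as [Kp [hKp plip]].
  exists (Rmin (x0 - a1) (b1 - x0)), (KF * Lg * Kp).
  split. apply Rmin_glb_lt; unfold a1, b1; lra. split. apply Rmult_le_pos; auto. apply Rmult_le_pos; auto.
  intros u v hu hv.
  pose proof (Rmin_l (x0 - a1) (b1 - x0)). pose proof (Rmin_r (x0 - a1) (b1 - x0)).
  apply Rabs_def2 in hu. apply Rabs_def2 in hv.
  assert (hu1 : a1 <= u <= b1) by lra. assert (hv1 : a1 <= v <= b1) by lra.
  assert (Iu : I u).
  { apply (I_conv I hI a b); auto. unfold btw. rewrite Rmin_left, Rmax_right by lra. unfold a1, b1 in *; lra. }
  assert (Iv : I v).
  { apply (I_conv I hI a b); auto. unfold btw. rewrite Rmin_left, Rmax_right by lra. unfold a1, b1 in *; lra. }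
  split; auto. split; auto.
  rewrite (f_eq u Iu), (f_eq v Iv). fold g.
  pose proof (himg u hu1). pose proof (himg v hv1).
  eapply Rle_trans. apply Flip; apply hrange; auto.
  rewrite !Rmult_assoc. apply Rmult_le_compat_l; auto.
  idtac.
  eapply Rle_trans. apply glip; auto.
  apply Rmult_le_compat_l; auto.
Qed.
End Main.
Theorem corollary2 (I : R -> Prop) (p q : R) (f : R -> R)
  (hI : is_open_interval I) (hIpos : forall x, I x -> 0 < x)
  (hq : q < 0) (hfpos : forall x, I x -> 0 < f x)
  (hconv : forall x y, I x -> I y -> f (H p x y) <= H q (f x) (f y)) :
  convex_on (Ip p I) (fpq p q f) /\
  (forall x, I x -> continuity_pt f x) /\
  locally_lipschitz_on I f.
Proof.
  split. { eapply g_convex; eauto. }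
  split.
  - intros x hx. edestruct f_loc as [dl [L [hdl [hL hloc]]]]; eauto.
    unfold continuity_pt, continue_in, limit1_in, limit_in. intros eps he.
    assert (hpos : 0 < eps / (L+1)) by (apply Rdiv_lt_0_compat; lra).
    exists (Rmin dl (eps/(L+1))). split. apply Rmin_glb_lt; auto.
    intros y [_ hy]. simpl in *. unfold R_dist in *.
    pose proof (Rmin_l dl (eps/(L+1))). pose proof (Rmin_r dl (eps/(L+1))).
    destruct (hloc y x) as [_ [_ hk]]. lra. rewrite Rminus_diag, Rabs_R0; auto.
    assert (Rabs (y - x) * (L+1) < eps).
    { assert (hy' : Rabs (y - x) < eps / (L+1)) by lra.
      apply (Rmult_lt_compat_r (L+1)) in hy'; [|lra].
      unfold Rdiv in hy'. rewrite Rmult_assoc, Rinv_l in hy' by lra. lra. }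
    pose proof (Rabs_pos (y - x)). nra.
  - intros x hx. edestruct f_loc as [dl [L [hdl [hL hloc]]]]; eauto.
    exists dl, L. split; auto. intros u v hu hv hu' hv'. apply hloc; auto.
Qed.
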